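(* Let $\Phi:\mathbb{R}^N\to\mathbb{R}^M$ and $L:\mathbb{R}^P\to\mathbb{R}^N$ be linear operators, let $\|\cdot\|_A$ be a norm on $\mathbb{R}^P$ with dual norm $\|\cdot\|_A^*$, set $R(x)=\|L^*x\|_A$, and let $C_A>0$ be a constant with $\|u\|_A\ge C_A\|u\|_2$ for all $u\in\mathbb{R}^P$. Let $x_0\in\mathbb{R}^N$, assume $\|\cdot\|_A$ is decomposable at $u_0=L^*x_0$ with associated subspace $T_0$ and vector $e_0\in T_0$, and let $S_0=T_0^\perp$. Suppose there exist $\eta\in\mathbb{R}^M$ and $\alpha\in\partial\|\cdot\|_A(L^*x_0)$ with $\Phi^*\eta=L\alpha$ and $\|\alpha_{S_0}\|_A^*<1$. Let $y\in\mathbb{R}^M$, $\lambda>0$, and let $x^\star$ be a minimizer of $\min_{x\in\mathbb{R}^N}\tfrac12\|y-\Phi x\|_2^2+\lambda R(x)$. Then $$\|L_{S_0}^*(x^\star-x_0)\|_2\le\frac{D^A_\alpha(L^*x^\star,L^*x_0)}{C_A\,(1-\|\alpha_{S_0}\|_A^* )}.$$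
   Context: For a subspace $V\subset\mathbb{R}^P$, $P_V$ denotes the orthogonal projector onto $V$, and $L_V=LP_V$, $L_V^*=P_VL^*$, $\alpha_V=P_V\alpha$ for $\alpha\in\mathbb{R}^P$. A norm $\|\cdot\|_A$ on $\mathbb{R}^P$ is decomposable at $u\in\mathbb{R}^P$ if (i) there exist a subspace $T\subset\mathbb{R}^P$ and a vector $e\in T$ such that $\partial\|\cdot\|_A(u)=\{\alpha\in\mathbb{R}^P:\ \alpha_T=e,\ \|\alpha_{T^\perp}\|_A^*\le 1\}$, and (ii) for every $z\in T^\perp$, $\|z\|_A=\sup\{\langle v,z\rangle: v\in T^\perp,\ \|v\|_A^*\le 1\}$. For $\alpha\in\partial\|\cdot\|_A(u_0)$, the Bregman distance is $D^A_\alpha(u,u_0)=\|u\|_A-\|u_0\|_A-\langle\alpha,u-u_0\rangle$. *)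

(* Defs.v *)
From HB Require Import structures.
From mathcomp Require Import all_boot all_order all_algebra.
From mathcomp Require Import all_classical all_reals.
Set Implicit Arguments. Unset Strict Implicit. Unset Printing Implicit Defensive.
Import Order.TTheory GRing.Theory Num.Theory.
Local Open Scope ring_scope.
Local Open Scope classical_set_scope.

(* Vectors of R^n are column vectors 'cV[R]_n; linear operators are matrices,
   the adjoint is the transpose. *)

Definition vdot (R : realType) (n : nat) (u v : 'cV[R]_n) : R :=
  \sum_(i < n) u i 0 * v i 0.

Definition norm2 (R : realType) (n : nat) (u : 'cV[R]_n) : R :=
  Num.sqrt (vdot u u).

Definition is_norm (R : realType) (n : nat) (nA : 'cV[R]_n -> R) : Prop :=
  [/\ forall u, 0 <= nA u,
      forall u, nA u = 0 -> u = 0,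
      forall (a : R) u, nA (a *: u) = `|a| * nA u
    & forall u v, nA (u + v) <= nA u + nA v].

Definition dual_norm (R : realType) (n : nat) (nA : 'cV[R]_n -> R)
  (v : 'cV[R]_n) : R :=
  sup [set vdot v u | u in [set u | nA u <= 1]].

Definition subdiff (R : realType) (n : nat) (nA : 'cV[R]_n -> R)
  (u alpha : 'cV[R]_n) : Prop :=
  forall w, nA u + vdot alpha (w - u) <= nA w.

(* A subspace T of R^n is represented by its orthogonal projector PT
   (a symmetric idempotent matrix); P_{T^perp} = 1 - PT. *)
Definition orth_proj (R : realType) (n : nat) (PT : 'M[R]_n) : Prop :=
  PT^T = PT /\ PT *m PT = PT.

Definition decomposable_at (R : realType) (n : nat) (nA : 'cV[R]_n -> R)
  (u : 'cV[R]_n) (PT : 'M[R]_n) (e : 'cV[R]_n) : Prop :=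
  [/\ orth_proj PT,
      PT *m e = e,
      (forall alpha, subdiff nA u alpha <->
          (PT *m alpha = e /\ dual_norm nA ((1%:M - PT) *m alpha) <= 1))
    & (forall z, (1%:M - PT) *m z = z ->
          nA z = sup [set vdot v z | v in
                       [set v | (1%:M - PT) *m v = v /\ dual_norm nA v <= 1]])].

Definition bregman (R : realType) (n : nat) (nA : 'cV[R]_n -> R)
  (alpha u u0 : 'cV[R]_n) : R :=
  nA u - nA u0 - vdot alpha (u - u0).

Definition objective (R : realType) (m n p : nat) (Phi : 'M[R]_(m, n))
  (L : 'M[R]_(n, p)) (nA : 'cV[R]_p -> R) (y : 'cV[R]_m) (lambda : R)
  (x : 'cV[R]_n) : R :=
  2^-1 * (norm2 (y - Phi *m x)) ^+ 2 + lambda * nA (L^T *m x).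

(* Main.v *)
Require Import Defs.
From HB Require Import structures.
From mathcomp Require Import all_boot all_order all_algebra.
From mathcomp Require Import all_classical all_reals.
Import Order.TTheory GRing.Theory Num.Theory.
Local Open Scope ring_scope.
Local Open Scope classical_set_scope.
From mathcomp Require Import lra.

Section S.
Context {R : realType} {p : nat}.
Implicit Types (u v w a : 'cV[R]_p) (A : 'M[R]_p).

Lemma vdotE u v : vdot u v = (u^T *m v) 0 0.
Proof. rewrite /vdot !mxE; apply: eq_bigr => i _; by rewrite mxE. Qed.

Lemma vdotC u v : vdot u v = vdot v u.
Proof. rewrite /vdot; apply: eq_bigr => i _; by rewrite mulrC. Qed.

Lemma vdotDl u v w : vdot (u + v) w = vdot u w + vdot v w.
Proof. rewrite /vdot -big_split; apply: eq_bigr => i _; by rewrite mxE mulrDl. Qed.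

Lemma vdotNl u w : vdot (- u) w = - vdot u w.
Proof. rewrite /vdot -sumrN; apply: eq_bigr => i _; by rewrite mxE mulNr. Qed.

Lemma vdotBl u v w : vdot (u - v) w = vdot u w - vdot v w.
Proof. by rewrite vdotDl vdotNl. Qed.

Lemma vdotZr (c : R) u w : vdot u (c *: w) = c * vdot u w.
Proof. rewrite /vdot mulr_sumr; apply: eq_bigr => i _; by rewrite mxE mulrCA. Qed.

Lemma vdot0r u : vdot u 0 = 0.
Proof. rewrite /vdot big1 // => i _; by rewrite mxE mulr0. Qed.

Lemma vdot_mul A u v : vdot (A *m u) v = vdot u (A^T *m v).
Proof. by rewrite !vdotE trmx_mul mulmxA. Qed.

Lemma coord_le u i : `|u i 0| <= norm2 u.
Proof.
rewrite /norm2 -sqrtr_sqr; apply: ler_wsqrtr.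
rewrite /vdot (bigD1 i) //= expr2 lerDl; apply: sumr_ge0 => j _; by rewrite -expr2 sqr_ge0.
Qed.

Lemma vdot_bound a u : vdot a u <= (\sum_(i < p) `|a i 0|) * norm2 u.
Proof.
rewrite /vdot mulr_suml; apply: ler_sum => i _.
apply: le_trans (ler_norm _) _; rewrite normrM; apply: ler_wpM2l => //; exact: coord_le.
Qed.
End S.
Section D.
Variables (R : realType) (p : nat) (nA : 'cV[R]_p -> R) (CA : R).
Hypothesis hN : is_norm nA.
Hypothesis hC : 0 < CA.
Hypothesis hCA : forall u, CA * norm2 u <= nA u.

Lemma nA0 : nA 0 = 0.
Proof. case: hN => _ _ hZ _. by rewrite -(scale0r (0 : 'cV[R]_p)) hZ normr0 mul0r. Qed.

Lemma dual_has_ub a : has_ubound [set vdot a u | u in [set u | nA u <= 1]].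
Proof.
exists ((\sum_(i < p) `|a i 0|) / CA) => _ [u /= hu <-].
apply: le_trans (vdot_bound a u) _.
rewrite ler_pdivlMr // -mulrA.
have hs : 0 <= \sum_(i < p) `|a i 0| by apply: sumr_ge0 => i _.
apply: le_trans (ler_wpM2l hs (_ : _ <= 1)) _; last by rewrite mulr1.
by rewrite mulrC (le_trans (hCA u)).
Qed.

Lemma vdot_dual a u : vdot a u <= dual_norm nA a * nA u.
Proof.
case: hN => h0 hz hZ _.
have [e|ne] := eqVneq (nA u) 0.
  by rewrite (hz _ e) vdot0r nA0 mulr0.
have t0 : 0 < nA u by rewrite lt0r ne h0.
have h1 : nA ((nA u)^-1 *: u) <= 1.
  by rewrite hZ ger0_norm ?invr_ge0 ?h0 // mulVf.
have hin : [set vdot a u | u in [set u | nA u <= 1]] (vdot a ((nA u)^-1 *: u)).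
  by exists ((nA u)^-1 *: u).
have := ub_le_sup (dual_has_ub a) hin.
rewrite /dual_norm vdotZr mulrC ler_pdivrMr //.
Qed.
End D.
Lemma dual0 (R : realType) (p : nat) (nA : 'cV[R]_p -> R) :
  is_norm nA -> dual_norm nA 0 <= 1.
Proof.
move=> hN; apply: ge_sup.
  by exists (vdot (0 : 'cV[R]_p) 0), 0 => //=; rewrite (@nA0 _ _ _ hN).
by move=> _ [u _ <-]; rewrite vdotC vdot0r.
Qed.

Theorem lemma2 (R : realType) (m n p : nat)
  (Phi : 'M[R]_(m, n)) (L : 'M[R]_(n, p)) (nA : 'cV[R]_p -> R) (CA : R)
  (x0 : 'cV[R]_n) (PT0 : 'M[R]_p) (e0 : 'cV[R]_p)
  (eta : 'cV[R]_m) (alpha : 'cV[R]_p)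
  (y : 'cV[R]_m) (lambda : R) (xstar : 'cV[R]_n) :
  is_norm nA ->
  0 < CA ->
  (forall u, CA * norm2 u <= nA u) ->
  decomposable_at nA (L^T *m x0) PT0 e0 ->
  subdiff nA (L^T *m x0) alpha ->
  Phi^T *m eta = L *m alpha ->
  dual_norm nA ((1%:M - PT0) *m alpha) < 1 ->
  0 < lambda ->
  (forall x, objective Phi L nA y lambda xstar <= objective Phi L nA y lambda x) ->
  norm2 ((1%:M - PT0) *m (L^T *m (xstar - x0)))
    <= bregman nA alpha (L^T *m xstar) (L^T *m x0)
       / (CA * (1 - dual_norm nA ((1%:M - PT0) *m alpha))).
Proof.
move=> hN hC hCA [[PTs PTi] He hsub hdec] ha _ hd _ _.
set PS := 1%:M - PT0.
have hPSs : PS^T = PS by rewrite /PS linearB /= trmx1 PTs.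
have hPSi : PS *m PS = PS.
  by rewrite /PS mulmxBl mul1mx mulmxBr mulmx1 PTi subrr subr0.
have hPTS : PT0 *m PS = 0 by rewrite /PS mulmxBr mulmx1 PTi subrr.
have hPSx x : PS *m x = x - PT0 *m x by rewrite /PS mulmxBl mul1mx.
have hal : PT0 *m alpha = e0 by case: ((hsub alpha).1 ha).
rewrite mulmxBr.
set u := L^T *m xstar; set u0 := L^T *m x0.
set w := u - u0; set z := PS *m w.
set d := dual_norm nA (PS *m alpha).
set D := bregman nA alpha u u0.
have hvz v : PS *m v = v -> vdot v z = vdot v w.
  by move=> hv; rewrite /z -hPSs -vdot_mul hv.
have step1 v : PS *m v = v -> dual_norm nA v <= 1 ->
    vdot v z - vdot (PS *m alpha) z <= D.
  move=> hv hdv.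
  have hb : subdiff nA u0 (e0 + v).
    apply/(hsub (e0 + v)); split.
      by rewrite mulmxDr He -hv mulmxA hPTS mul0mx addr0.
    by rewrite mulmxDr hv hPSx He subrr add0r.
  have := hb u.
  rewrite (hvz _ hv) (hvz _ _); last by rewrite mulmxA hPSi.
  rewrite hPSx hal /D /bregman -/w vdotDl vdotBl.
  lra.
have step2 : nA z <= D + vdot (PS *m alpha) z.
  have hz : PS *m z = z by rewrite /z mulmxA hPSi.
  rewrite (hdec z hz); apply: ge_sup.
    by exists (vdot 0 z), 0 => //=; rewrite mulmx0; split => //; exact: dual0.
  move=> _ [v [hv hdv] <-]; have := step1 v hv hdv; lra.
have step3 := @vdot_dual _ _ _ _ hN hC hCA (PS *m alpha) z.
have hd1 : 0 < 1 - d by rewrite subr_gt0.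
rewrite ler_pdivlMr ?mulr_gt0 //.
have := ler_wpM2r (ltW hd1) (hCA z).
have h0z : 0 <= nA z by case: hN.
rewrite -/d in step3.
nra.
Qed.
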